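(* Let $a,b\in\mathbb C$, let $p,k\ge0$ be integers and let $c_j,d_j,e_j\in\mathbb C$ for $j=0,\dots,p-1$. Then the coefficient of $x^p$ in $\widetilde{\mathcal T}_k^{a,b}\left[\left(\prod_{j=0}^{p-1}(c_jx-d_ji+e_j)\right)_i\right]$ equals $$\sum_{j=0}^{k}\frac{k!}{(k-j)!}\left(\sum_{\substack{S\sqcup T=\{0,\dots,p-1\}\\ |S|=j}}\prod_{s\in S}d_s\prod_{t\in T}c_t\right)\prod_{r=0}^{k-j-1}(a-b+j+r),$$ where the inner sum is over all ordered pairs $(S,T)$ of disjoint subsets with union $\{0,\dots,p-1\}$ and $|S|=j$ (it is empty, hence $0$, when $j>p$).
   Context: For integers $0\le i\le k$, $P_i^k(x;a,b):=\prod_{j=0}^{k-i-1}(x+j+a)\prod_{j=0}^{i-1}(x-j+b)$. For a sequence of polynomials $(a_i(x))_{i\ge0}$, $\widetilde{\mathcal T}_k^{a,b}[(a_i(x))_i]:=(-1)^k\sum_{i=0}^k(-1)^{k-i}\binom{k}{i}P_i^k(x;a,b)\,a_i(x)$. *)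

(* Defs.v *)
From mathcomp Require Import all_boot all_order all_algebra.
From mathcomp Require Import complex Rstruct.
Set Implicit Arguments. Unset Strict Implicit. Unset Printing Implicit Defensive.
Import GRing.Theory Num.Theory.
Local Open Scope ring_scope.

Definition C : Type := complex Rdefinitions.R.

Definition Pik (i k : nat) (a b : C) : {poly C} :=
  (\prod_(j < k - i) ('X + (j%:R + a)%:P)) *
  (\prod_(j < i) ('X + (b - j%:R)%:P)).

Definition Ttilde (k : nat) (a b : C) (s : nat -> {poly C}) : {poly C} :=
  (-1) ^+ k * \sum_(i < k.+1) ((-1) ^+ (k - i) * ('C(k, i))%:R *: (Pik i k a b * s i)).

Definition seq_prod (p : nat) (c d e : nat -> C) (i : nat) : {poly C} :=
  \prod_(j < p) ((c j) *: 'X + (e j - d j * i%:R)%:P).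

(* Main.v *)
Require Import Defs.
From mathcomp Require Import all_boot all_order all_algebra.
From mathcomp Require Import complex Rstruct.
From mathcomp Require Import ring zify.
Import GRing.Theory Num.Theory.
Local Open Scope ring_scope.

Lemma setsum_coef (p j : nat) (c d : nat -> C) :
  (\prod_(t < p) ((d t)%:P * 'X + (c t)%:P))`_j =
  \sum_(S : {set 'I_p} | #|S| == j)
          (\prod_(s in S) d s) * (\prod_(t in ~: S) c t).
Proof.
rewrite bigA_distr coef_sum.
transitivity (\sum_(S in {set 'I_p}) if #|S| == j then
   (\prod_(s in S) d s) * (\prod_(t in ~: S) c t) else 0).
  apply: eq_bigr => S _.
  rewrite big_if /= big_split /= prodr_const -!rmorph_prod /=.
  rewrite mulrC mulrA -rmorphM /= coefCM coefXn.
  rewrite [X in _ * X * _](eq_bigl (fun i => i \in S)) //.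
  rewrite [X in X * _ * _](eq_bigl (fun i => i \in ~: S)); last first.
    by move=> i; rewrite in_setC.
  rewrite [j == _]eq_sym.
  by case: ifP; rewrite ?mulr1 ?mulr0 // mulrC.
by rewrite -big_mkcond.
Qed.

Definition TT (k : nat) (a b : C) (s : nat -> {poly C}) : {poly C} :=
  \sum_(i < k.+1) (((-1) ^+ i * ('C(k, i))%:R) *: (Pik i k a b * s i)).

Lemma Ttilde_TT k a b s : Ttilde k a b s = TT k a b s.
Proof.
rewrite /Ttilde /TT mulr_sumr; apply: eq_bigr => i _.
have -> : (-1) ^+ k = ((-1) ^+ k)%:P :> {poly C} by rewrite rmorphXn rmorphN1.
rewrite mul_polyC scalerA mulrA -exprD.
have -> : (k + (k - i) = i + (k - i).*2)%N.
  have := ltn_ord i; rewrite -addnn; lia.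
by rewrite exprD -mul2n exprM sqrrN expr1n expr1n mulr1.
Qed.

Lemma PikS_i i k a b : Pik i.+1 k.+1 a b = ('X + b%:P) * Pik i k a (b - 1).
Proof.
rewrite /Pik subSS big_ord_recl /= subr0 mulrCA; congr (_ * (_ * _)).
by apply: eq_bigr => j _; rewrite /= mulrS opprD addrA.
Qed.

Lemma PikS_k i k a b : (i <= k)%N -> Pik i k.+1 a b = ('X + a%:P) * Pik i k (a + 1) b.
Proof.
move=> hi; rewrite /Pik subSn // big_ord_recl /= add0r -mulrA; congr (_ * (_ * _)).
by apply: eq_bigr => j _; rewrite /= mulrS; congr (_ + _%:P); ring.
Qed.

Lemma TT_Si k a b (s : nat -> {poly C}) :
  \sum_(i < k.+2) (((-1) ^+ i * ('C(k.+1, i))%:R * i%:R) *: (Pik i k.+1 a b * s i))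
  = - ((k.+1)%:R *: (('X + b%:P) * TT k a (b - 1) (fun i => s i.+1))).
Proof.
rewrite big_ord_recl /= mulr0 scale0r add0r /TT mulr_sumr scaler_sumr -sumrN.
apply: eq_bigr => i _; rewrite /= PikS_i -mulrA -scalerAr scalerA -scaleNr.
have -> : bump 0 i = i.+1 by []. congr (_ *: _); last by rewrite -mulrA.
rewrite -natrM mulnC -mul_bin_diag natrM exprS; ring.
Qed.

Lemma TT_Sk k a b (s : nat -> {poly C}) :
  \sum_(i < k.+2) (((-1) ^+ i * ('C(k.+1, i))%:R * (k.+1 - i)%:R) *: (Pik i k.+1 a b * s i))
  = (k.+1)%:R *: (('X + a%:P) * TT k (a + 1) b s).
Proof.
rewrite big_ord_recr /= subnn mulr0 scale0r addr0 /TT mulr_sumr scaler_sumr.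
apply: eq_bigr => i _; rewrite /= (PikS_k i k a b (ltn_ord i)) -mulrA -scalerAr scalerA.
congr (_ *: _); last by rewrite -mulrA.
rewrite -natrM mulnC -mul_bin_down natrM; ring.
Qed.

Lemma TT_rec k a b (s : nat -> {poly C}) :
  TT k.+1 a b s = ('X + a%:P) * TT k (a + 1) b s - ('X + b%:P) * TT k a (b - 1) (fun i => s i.+1).
Proof.
have hk : (k.+1)%:R != 0 :> C by rewrite pnatr_eq0.
apply: (scalerI hk).
rewrite scalerBr -TT_Sk -[X in _ - X]opprK -TT_Si opprK -big_split /=.
rewrite /TT scaler_sumr; apply: eq_bigr => i _.
rewrite scalerA -scalerDl; congr (_ *: _).
have hi : (i <= k.+1)%N := ltn_ord i.
rewrite -mulrDr -natrD subnK //; ring.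
Qed.

Lemma TT_one k a b :
  TT k a b (fun _ => 1) = (\prod_(r < k) (a - b + r%:R))%:P.
Proof.
elim: k a b => [|k IH] a b.
  by rewrite /TT big_ord1 /Pik !big_ord0 !mulr1 expr0 scale1r polyC1.
rewrite TT_rec IH IH big_ord_recl /=.
have -> : \prod_(i < k) (a + 1 - b + i%:R) = \prod_(i < k) (a - b + (bump 0 i)%:R).
  by apply: eq_bigr => i _; rewrite /bump /= mulrS; ring.
have -> : \prod_(i < k) (a - (b - 1) + i%:R) = \prod_(i < k) (a - b + (bump 0 i)%:R).
  by apply: eq_bigr => i _; rewrite /bump /= mulrS; ring.
rewrite rmorphM /= addr0 rmorphB /=; ring.
Qed.

Lemma TT_lin k a b (s : nat -> {poly C}) c0 d0 e0 :
 TT k a b (fun i => s i * (c0 *: 'X + (e0 - d0 * i%:R)%:P)) =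
 (c0 *: 'X + e0%:P) * TT k a b s
 - d0 *: \sum_(i < k.+1) (((-1) ^+ i * 'C(k, i)%:R * i%:R) *: (Pik i k a b * s i)).
Proof.
rewrite /TT mulr_sumr scaler_sumr -sumrB; apply: eq_bigr => i _.
rewrite -!mul_polyC !rmorphM rmorphB /= !rmorphM /=; ring.
Qed.

Lemma TT_ext k a b (s t : nat -> {poly C}) : (forall i, s i = t i) -> TT k a b s = TT k a b t.
Proof. by move=> H; rewrite /TT; apply: eq_bigr => i _; rewrite H. Qed.

Lemma seq_prodS p c d e i :
  seq_prod p.+1 c d e i = seq_prod p c d e i * (c p *: 'X + (e p - d p * i%:R)%:P).
Proof. by rewrite /seq_prod big_ord_recr. Qed.

Lemma seq_prod_shift p c d e i :
  seq_prod p c d e i.+1 = seq_prod p c d (fun j => e j - d j) i.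
Proof.
rewrite /seq_prod; apply: eq_bigr => j _; congr (_ + _%:P).
by rewrite mulrS; ring.
Qed.

Lemma seq_prod0 c d e i : seq_prod 0 c d e i = 1.
Proof. by rewrite /seq_prod big_ord0. Qed.

Lemma size_lin (c0 e0 : C) : leq (size (c0 *: 'X + e0%:P)) 2.
Proof.
apply: leq_trans (size_polyD _ _) _; rewrite geq_max; apply/andP; split.
  by apply: leq_trans (size_scale_leq _ _) _; rewrite size_polyX.
by apply: leq_trans (size_polyC_leq1 _) _.
Qed.

Lemma size_Xb (b : C) : leq (size ('X + b%:P)) 2.
Proof. by rewrite -[X in X + _]scale1r size_lin. Qed.

Lemma size_mul2 (L Q : {poly C}) n :
  leq (size L) 2 -> leq (size Q) n.+1 -> leq (size (L * Q)) n.+2.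
Proof.
move=> hL hQ; apply: leq_trans (size_polyMleq _ _) _; lia.
Qed.

Lemma TT_step k a b p c d e :
  TT k a b (seq_prod p.+1 c d e) =
  (c p *: 'X + (e p)%:P) * TT k a b (seq_prod p c d e)
  - d p *: (if k is k'.+1 then
              - ((k'.+1)%:R *: (('X + b%:P) * TT k' a (b - 1) (seq_prod p c d (fun j => e j - d j))))
            else 0).
Proof.
rewrite (TT_ext _ _ _ _ _ (seq_prodS p c d e)) TT_lin; congr (_ - _ *: _).
case: k => [|k].
  by rewrite big_ord1 /= mulr0 scale0r.
rewrite TT_Si; congr (- (_ *: (_ * _))).
by apply: TT_ext => i; rewrite seq_prod_shift.
Qed.

Lemma TT_size p c d : forall k a b e,
  leq (size (TT k a b (seq_prod p c d e))) p.+1.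
Proof.
elim: p => [|p IH] k a b e.
  by rewrite (TT_ext _ _ _ _ _ (seq_prod0 c d e)) TT_one size_polyC_leq1.
rewrite TT_step; apply: leq_trans (size_polyD _ _) _; rewrite geq_max; apply/andP; split.
  by apply: size_mul2; [apply: size_lin | apply: IH].
rewrite size_polyN; apply: leq_trans (size_scale_leq _ _) _.
case: k => [|k]; first by rewrite size_poly0.
rewrite size_polyN; apply: leq_trans (size_scale_leq _ _) _.
by apply: size_mul2; [apply: size_Xb | apply: IH].
Qed.

Definition Qp p (c d : nat -> C) : {poly C} := \prod_(t < p) ((d t)%:P * 'X + (c t)%:P).
Definition G p c d k (u : C) : C :=
  \sum_(j < k.+1) ((k ^_ j)%N%:R * (Qp p c d)`_j * \prod_(r < k - j) (u + j%:R + r%:R)).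

Lemma coefQS p c d j : (Qp p.+1 c d)`_j =
  (Qp p c d)`_j * c p + (if j is j'.+1 then (Qp p c d)`_j' * d p else 0).
Proof.
rewrite /Qp big_ord_recr /= mulrDr coefD coefMC mulrA coefMX coefMC.
by case: j => [|j] /=; rewrite ?addr0 ?add0r // addrC.
Qed.

Lemma Qp0 c d i : (Qp 0 c d)`_i = (i == 0)%:R.
Proof. by rewrite /Qp big_ord0 coef1. Qed.

Lemma G_step0 p c d u : G p.+1 c d 0 u = c p * G p c d 0 u.
Proof. by rewrite /G !big_ord1 /= coefQS addr0; ring. Qed.

Lemma G_stepS p c d k u :
  G p.+1 c d k.+1 u = c p * G p c d k.+1 u + d p * (k.+1)%:R * G p c d k (u + 1).
Proof.
rewrite /G !mulr_sumr.
under eq_bigr => j _ do rewrite coefQS mulrDr mulrDl.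
rewrite big_split /=; congr (_ + _).
  by apply: eq_bigr => j _; ring.
rewrite big_ord_recl /= mulr0 mul0r add0r.
apply: eq_bigr => j _; rewrite /bump /= ffactSS natrM subSS.
have -> : \prod_(r < k - j) (u + (1 + j)%:R + r%:R) = \prod_(r < k - j) (u + 1 + j%:R + r%:R).
  by apply: eq_bigr => r _; rewrite natrD; ring.
ring.
Qed.

Lemma TT_coef p c d : forall k a b e,
  (TT k a b (seq_prod p c d e))`_p = G p c d k (a - b).
Proof.
elim: p => [|p IH] k a b e.
  rewrite (TT_ext _ _ _ _ _ (seq_prod0 c d e)) TT_one coefC /= /G.
  rewrite big_ord_recl /= (Qp0 c d 0) eqxx subn0 mulr1 mul1r.
  rewrite [X in _ = _ + X]big1 ?addr0; last by move=> j _; rewrite (Qp0 c d (bump 0 j)) /= mulr0 mul0r.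
  by [].
have hT : forall k a b e, (TT k a b (seq_prod p c d e))`_p.+1 = 0.
  by move=> k' a' b' e'; apply: nth_default; apply: TT_size.
rewrite TT_step coefB mulrDl -scalerAl coefD coefZ coefXM coefCM /= hT IH mulr0 addr0.
case: k => [|k].
  by rewrite scaler0 coef0 subr0 G_step0.
rewrite coefZ coefN coefZ mulrDl coefD coefXM coefCM /= hT IH mulr0 addr0 G_stepS.
have -> : a - (b - 1) = a - b + 1 by ring.
ring.
Qed.

Theorem corollary3 (a b : C) (p k : nat) (c d e : nat -> C) :
  (Ttilde k a b (seq_prod p c d e))`_p =
  \sum_(j < k.+1)
     ((k ^_ j)%N%:R *
      (\sum_(S : {set 'I_p} | #|S| == j)
          (\prod_(s in S) d s) * (\prod_(t in ~: S) c t)) *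
      \prod_(r < k - j) (a - b + j%:R + r%:R)).
Proof.
rewrite Ttilde_TT TT_coef /G; apply: eq_bigr => j _.
by rewrite /Qp setsum_coef.
Qed.
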